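(* Let $\pi\in\{2143,1234\}$ and $w\in B_n$. If $w$ contains $\pi$, then there exist indices $-n\leq i_1<i_2<i_3<i_4\leq n$ (all nonzero) at which $w$ forms the pattern $\pi$ and such that there is no $k\in\{1,2,3,4\}$ with $i_k>0$ and $w(i_k)<0$.
   Context: $B_n$ is the group of permutations $w$ of $\{-n,\ldots,-1,1,\ldots,n\}$ with $w(-i)=-w(i)$. Indices $i_1<i_2<i_3<i_4$ form the pattern $1234$ if $w(i_1)<w(i_2)<w(i_3)<w(i_4)$, and form the pattern $2143$ if $w(i_2)<w(i_1)<w(i_4)<w(i_3)$. $w$ contains $\pi$ if some such quadruple of indices forms $\pi$. *)

(* Defs.v *)
From HB Require Import structures.
From mathcomp Require Import all_boot all_order all_algebra.
Set Implicit Arguments. Unset Strict Implicit. Unset Printing Implicit Defensive.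
Import Order.TTheory GRing.Theory Num.Theory.
Local Open Scope ring_scope.

Definition bdom (n : nat) (i : int) : bool := (i != 0) && (`|i| <= n%:Z).

(* w : int -> int represents an element of B_n: it permutes {-n..-1,1..n}
   (injective self-map of this finite set) and satisfies w(-i) = -w(i).
   Values of w outside this set are irrelevant. *)
Definition signed_perm (n : nat) (w : int -> int) : Prop :=
  [/\ (forall i, bdom n i -> bdom n (w i)),
      {in bdom n &, injective w} &
      (forall i, bdom n i -> w (- i) = - w i)].

Inductive pat := P1234 | P2143.

Definition forms (w : int -> int) (p : pat) (i1 i2 i3 i4 : int) : bool :=
  match p with
  | P1234 => [&& w i1 < w i2, w i2 < w i3 & w i3 < w i4]
  | P2143 => [&& w i2 < w i1, w i1 < w i4 & w i4 < w i3]
  end.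

Definition occurrence (n : nat) (w : int -> int) (p : pat) (i1 i2 i3 i4 : int) : bool :=
  [&& bdom n i1, bdom n i2, bdom n i3, bdom n i4,
      i1 < i2, i2 < i3, i3 < i4 & forms w p i1 i2 i3 i4].

Definition contains (n : nat) (w : int -> int) (p : pat) : Prop :=
  exists i1 i2 i3 i4, occurrence n w p i1 i2 i3 i4.

(* Main.v *)
Require Import Defs.
From mathcomp Require Import all_boot all_order all_algebra.
From mathcomp Require Import zify.
Import Order.TTheory GRing.Theory Num.Theory.
Local Open Scope ring_scope.

Lemma bdomN n (i : int) : bdom n i -> bdom n (- i).
Proof. by rewrite /bdom oppr_eq0 normrN. Qed.

Lemma good4 (w : int -> int) (a b c d : int) :
  (0 < a -> 0 <= w a) -> (0 < b -> 0 <= w b) -> (0 < c -> 0 <= w c) ->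
  (0 < d -> 0 <= w d) ->
  ~ (exists k : int, k \in [:: a; b; c; d] /\ 0 < k /\ w k < 0).
Proof.
move=> ha hb hc hd [k [+ [k0 wk]]].
rewrite !inE => /or4P[] /eqP E; subst k;
  [move: (ha k0)|move: (hb k0)|move: (hc k0)|move: (hd k0)]; lia.
Qed.

Lemma tri (i a : int) : [\/ i <= 0, (0 < i) /\ (0 <= a) | (0 < i) /\ (a < 0)].
Proof.
case: (lerP i 0) => hi; first by apply: Or31.
case: (lerP 0 a) => ha; [by apply: Or32|by apply: Or33].
Qed.

Lemma core2143 (i1 i2 i3 i4 a1 a2 a3 a4 : int) :
  i1 < i2 -> i2 < i3 -> i3 < i4 -> a2 < a1 -> a1 < a4 -> a4 < a3 ->
  [\/ [/\ 0 < i1 -> 0 <= a1, 0 < i2 -> 0 <= a2, 0 < i3 -> 0 <= a3 & 0 < i4 -> 0 <= a4],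
      [/\ i1 < 0 -> a1 <= 0, i2 < 0 -> a2 <= 0, i3 < 0 -> a3 <= 0 & i4 < 0 -> a4 <= 0],
      0 < i3 /\ 0 < a4 | i2 < 0 /\ a1 < 0].
Proof.
move=> *.
Time (case: (lerP a4 0) => ?; case: (lerP i3 0) => ?; case: (lerP 0 i2) => ?; case: (lerP 0 a1) => ?;
 first [ by apply: Or43; lia | by apply: Or44; lia | by apply: Or41; split; lia | by apply: Or42; split; lia ]).
Qed.

Lemma core1234 (i1 i2 i3 i4 a1 a2 a3 a4 : int) :
  i1 < i2 -> i2 < i3 -> i3 < i4 -> a1 < a2 -> a2 < a3 -> a3 < a4 ->
  [/\ 0 < i1 -> 0 <= a1, 0 < i2 -> 0 <= a2, 0 < i3 -> 0 <= a3 & 0 < i4 -> 0 <= a4] \/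
      [/\ i1 < 0 -> a1 <= 0, i2 < 0 -> a2 <= 0, i3 < 0 -> a3 <= 0 & i4 < 0 -> a4 <= 0].
Proof.
move=> *.
Time (case: (lerP a1 0) => ?; case: (lerP a2 0) => ?; case: (lerP a3 0) => ?; case: (lerP a4 0) => ?; case: (lerP 0 i1) => ?; case: (lerP 0 i2) => ?; case: (lerP 0 i3) => ?; case: (lerP 0 i4) => ?;
 first [ by left; split; lia | by right; split; lia ]).
Qed.

Ltac cand c1 c2 c3 c4 :=
  exists c1, c2, c3, c4; split;
  [ rewrite /occurrence /forms; apply/and5P; split => //;
    apply/and4P; split; try lia; apply/and3P; split; lia
  | apply: good4; lia ].

Theorem lemma2p2 (n : nat) (w : int -> int) (p : pat) :
  signed_perm n w -> contains n w p ->
  exists i1 i2 i3 i4 : int,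
    occurrence n w p i1 i2 i3 i4 /\
    ~ (exists k : int, k \in [:: i1; i2; i3; i4] /\ 0 < k /\ w k < 0).
Proof.
move=> [_ _ Hodd] [i1 [i2 [i3 [i4]]]].
rewrite /occurrence => /and5P[d1 d2 d3 d4 /and4P[l12 l23 l34 F]].
have N1 := Hodd _ d1; have N2 := Hodd _ d2; have N3 := Hodd _ d3; have N4 := Hodd _ d4.
have e1 := @bdomN _ _ d1; have e2 := @bdomN _ _ d2; have e3 := @bdomN _ _ d3; have e4 := @bdomN _ _ d4.
clear Hodd.
case: p F => /= /and3P[f1 f2 f3].
- case: (@core1234 _ _ _ _ _ _ _ _ l12 l23 l34 f1 f2 f3) => -[g1 g2 g3 g4].
  + Time cand i1 i2 i3 i4.
  + Time cand (-i4) (-i3) (-i2) (-i1).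
- case: (@core2143 _ _ _ _ _ _ _ _ l12 l23 l34 f1 f2 f3) => [[g1 g2 g3 g4]|[g1 g2 g3 g4]|[g1 g2]|[g1 g2]].
  + Time cand i1 i2 i3 i4.
  + Time cand (-i4) (-i3) (-i2) (-i1).
  + Time cand (-i4) (-i3) i3 i4.
  + Time cand i1 i2 (-i2) (-i1).
Qed.
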